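(* Let $(G;+)$ be a finite abelian group, $n\ge3$, and suppose that $\rho=\{(a_1,\dots,a_n)\in G^n:\ a_1+\dots+a_n=0\}$ is a key relation. Then the order of $G$ is a power of a prime number.
   Context: A unary vector-function is a tuple $\Psi=(\psi_1,\dots,\psi_n)$ of maps $\psi_i:G\to G$ acting coordinatewise; it preserves $\rho$ if $\Psi(\rho)\subseteq\rho$. $\rho\subseteq G^n$ is a key relation if there is $\beta\in G^n\setminus\rho$ (a key tuple) such that every $\alpha\in G^n\setminus\rho$ is mapped to $\beta$ by some unary vector-function preserving $\rho$. *)

(* Defs.v *)
From HB Require Import structures.
From mathcomp Require Import all_boot all_order all_algebra.
Set Implicit Arguments. Unset Strict Implicit. Unset Printing Implicit Defensive.
Import GRing.Theory.
Local Open Scope ring_scope.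

Definition vapply (G : Type) (n : nat) (Psi : 'I_n -> G -> G)
  (a : {ffun 'I_n -> G}) : {ffun 'I_n -> G} :=
  [ffun i => Psi i (a i)].

Definition vpreserves (G : Type) (n : nat) (Psi : 'I_n -> G -> G)
  (rho : {ffun 'I_n -> G} -> Prop) : Prop :=
  forall a, rho a -> rho (vapply Psi a).

Definition key_relation (G : Type) (n : nat)
  (rho : {ffun 'I_n -> G} -> Prop) : Prop :=
  exists beta : {ffun 'I_n -> G}, ~ rho beta /\
    forall alpha : {ffun 'I_n -> G}, ~ rho alpha ->
      exists Psi : 'I_n -> G -> G, vpreserves Psi rho /\ vapply Psi alpha = beta.

Definition zero_sum_rel (G : zmodType) (n : nat) (a : {ffun 'I_n -> G}) : Prop :=
  \sum_(i < n) a i = 0.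

(* Main.v *)
Require Import Defs.
From HB Require Import structures.
From mathcomp Require Import all_boot all_order all_algebra.
From mathcomp Require Import all_fingroup all_solvable.

Set Implicit Arguments. Unset Strict Implicit. Unset Printing Implicit Defensive.
Import GRing.Theory.

Section Aux.
Local Open Scope ring_scope.

Definition j0 m : 'I_m.+3 := @Ordinal m.+3 0 isT.
Definition j1 m : 'I_m.+3 := @Ordinal m.+3 1 isT.
Definition j2 m : 'I_m.+3 := @Ordinal m.+3 2 isT.

Definition t3 (G : zmodType) m (x y z : G) : {ffun 'I_m.+3 -> G} :=
  [ffun i => if i == j0 m then x else if i == j1 m then y
             else if i == j2 m then z else 0].

Arguments t3 {G m}.

Lemma sum3 (G : zmodType) m (F : 'I_m.+3 -> G -> G) x y z :
  \sum_i F i (t3 x y z i) = F (j0 m) x + F (j1 m) y + F (j2 m) z +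
     \sum_(i | (i != j0 m) && (i != j1 m) && (i != j2 m)) F i 0.
Proof.
rewrite (bigD1 (j0 m)) //= (bigD1 (j1 m)) //= (bigD1 (j2 m)) //=.
rewrite !ffunE /= !addrA; congr (_ + _).
apply: eq_big => // i.
by rewrite ffunE => /andP[/andP[/negbTE -> /negbTE ->] /negbTE ->].
Qed.

Lemma sumt3 (G : zmodType) m (x y z : G) :
  \sum_i t3 (m:=m) x y z i = x + y + z.
Proof.
have := sum3 (fun _ (u : G) => u) x y z => /= ->.
by rewrite big1 ?addr0.
Qed.

Lemma rearr3 (G : zmodType) (a b c a0 b0 c0 : G) :
  a - a0 + (b - b0) + (c - c0) = (a + b + c) - (a0 + b0 + c0).
Proof. by rewrite !opprD !addrA (addrAC a) (addrAC (a + b - a0)) (addrAC (a + b)). Qed.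

Lemma key_mul (G : zmodType) m (Psi : 'I_m.+3 -> G -> G)
  (hP : vpreserves Psi (@zero_sum_rel G m.+3)) (g : G) k :
  g *+ k = 0 -> (\sum_i vapply Psi (t3 g 0 0) i) *+ k = 0.
Proof.
pose R := \sum_(i | (i != j0 m) && (i != j1 m) && (i != j2 m)) Psi i 0.
have S3 : forall x y z, x + y + z = 0 ->
    Psi (j0 m) x + Psi (j1 m) y + Psi (j2 m) z + R = 0.
  move=> x y z hxyz; have := hP (t3 x y z).
  rewrite /zero_sum_rel sumt3 => /(_ hxyz).
  under eq_bigr => i _ do rewrite ffunE.
  by rewrite sum3.
have z3 : (0:G) + 0 + 0 = 0 by rewrite !addr0.
have E0 := S3 0 0 0 z3.
pose h k x := Psi k x - Psi k 0.
have H3 : forall x y z, x + y + z = 0 -> h (j0 m) x + h (j1 m) y + h (j2 m) z = 0.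
  move=> x y z hxyz; have E1 := S3 _ _ _ hxyz.
  rewrite /h rearr3.
  move/eqP: E0; rewrite addr_eq0 => /eqP ->.
  move/eqP: E1; rewrite addr_eq0 => /eqP ->.
  by rewrite subrr.
have hz : forall k, h k 0 = 0 by move=> k'; rewrite /h subrr.
have h00 := hz (j0 m).
have h1 : forall x, h (j1 m) x = - h (j0 m) (- x).
  move=> x; have := H3 (- x) x 0; rewrite addNr add0r hz addr0 => /(_ erefl) /eqP.
  by rewrite addrC addr_eq0 => /eqP.
have h2 : forall x, h (j2 m) x = - h (j0 m) (- x).
  move=> x; have := H3 (- x) 0 x; rewrite addr0 addNr hz addr0 => /(_ erefl) /eqP.
  by rewrite addrC addr_eq0 => /eqP.
have hadd : forall u v, h (j0 m) (u + v) = h (j0 m) u + h (j0 m) v.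
  move=> u v; have := H3 (u + v) (- u) (- v).
  rewrite -addrA -opprD subrr => /(_ erefl); rewrite h1 h2 !opprK => /eqP.
  by rewrite -addrA -opprD subr_eq0 => /eqP.
have hmul : forall k x, h (j0 m) (x *+ k) = h (j0 m) x *+ k.
  by move=> k' x; elim: k' => [|k' IH]; rewrite ?mulr0n ?h00 // !mulrS hadd IH.
have -> : \sum_i vapply Psi (t3 g 0 0) i = h (j0 m) g.
  under eq_bigr => i _ do rewrite ffunE.
  rewrite sum3 /h; move/eqP: E0; rewrite -!addrA addr_eq0 => /eqP ->.
  by rewrite opprK.
by move=> gk; rewrite -hmul gk h00.
Qed.

End Aux.
Arguments t3 {G m}.

Theorem mainTheorem16 (G : finZmodType) (n : nat) (hn : (3 <= n)%N)
  (hkey : key_relation (@zero_sum_rel G n)) :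
  exists p k : nat, prime p /\ #|G| = (p ^ k)%N.
Proof.
case: n hn hkey => [|[|[|m]]] // _ [beta [hb hall]].
set s := (\sum_i beta i)%R.
have s0 : (s != 0)%R by apply/eqP.
have key : forall q, prime q -> (q %| #|G|)%N -> #[s]%g = q.
  move=> q pq qG.
  have qG' : (q %| #|[set: G]|)%N by rewrite cardsT.
  have [g _ og] := Cauchy pq qG'.
  have g0 : (g != 0)%R.
    apply/eqP => g0; move: og; rewrite g0.
    have -> : #[(0%R : G)]%g = 1%N by apply/eqP; rewrite order_eq1.
    by move=> q1; move: pq; rewrite -q1.
  have na : ~ zero_sum_rel (t3 (m:=m) (g : G) 0%R 0%R).
  rewrite /zero_sum_rel. rewrite sumt3 !addr0; exact/eqP.
  have [Psi [hP hPa]] := hall _ na.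
  have gq : (g *+ q = 0)%R by rewrite -og; exact: expg_order.
  have := key_mul hP gq; rewrite hPa -/s => sq.
  have sd : (#[s]%g %| q)%N by rewrite order_dvdn; apply/eqP.
  case/primeP: pq => _ /(_ _ sd) /pred2P [|//].
  by move/eqP; rewrite order_eq1 => /eqP s1; move: s0; rewrite s1 eqxx.
have so1 : #[s]%g != 1%N by rewrite order_eq1.
have sG : (#[s]%g %| #|G|)%N by rewrite -cardsT; apply: order_dvdG; rewrite inE.
have G1 : (1 < #|G|)%N.
  apply: (@leq_trans #[s]%g); first by rewrite ltn_neqAle eq_sym so1 order_gt0.
  by apply: dvdn_leq sG; apply/card_gt0P; exists 0%R; rewrite !inE.
have pp := pdiv_prime G1.
have ps := key _ pp (pdiv_dvd _).
exists (pdiv #|G|), (logn (pdiv #|G|) #|G|); split => //.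
rewrite -p_part part_pnat_id //; apply/pnatP => [|q pq qG]; first exact: ltnW.
by rewrite inE /= -(key _ pq qG) ps.
Qed.
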